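(* Let $n\in\mathbb N$ and let $X_1,\dots,X_n$ be independent random variables with ${\sf E}X_i=0$ and $0<{\sf E}X_i^2<\infty$. Then for every $\varepsilon\in(0,\infty)$, $$L_n(1)+M_n(1)\le L_n(\varepsilon)+M_n(\varepsilon).$$
   Context: $B_n^2=\sum_{i=1}^n{\sf E}X_i^2$. For $\varepsilon>0$, $L_n(\varepsilon)=B_n^{-2}\sum_{i=1}^n{\sf E}X_i^2\mathbb I(|X_i|\ge\varepsilon B_n)$ and $M_n(\varepsilon)=B_n^{-3}\sum_{i=1}^n{\sf E}|X_i|^3\mathbb I(|X_i|<\varepsilon B_n)$, where $\mathbb I(A)$ is the indicator of the event $A$. *)

(* Defs.v *)
From HB Require Import structures.
From mathcomp Require Import all_boot all_order all_algebra.
From mathcomp Require Import all_classical all_reals all_analysis.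
Set Implicit Arguments. Unset Strict Implicit. Unset Printing Implicit Defensive.
Import Order.TTheory GRing.Theory Num.Theory.
Local Open Scope classical_set_scope.
Local Open Scope ring_scope.

Definition mutually_independent {d} {T : measurableType d} {R : realType}
  (P : probability T R) (n : nat) (X : 'I_n -> {RV P >-> R}) : Prop :=
  forall (S : {set 'I_n}) (A : 'I_n -> set R),
    (forall i, measurable (A i)) ->
    P (\bigcap_(i in [set j | j \in S]) (X i @^-1` A i)) =
    (\prod_(i in S) P (X i @^-1` A i))%E.

Definition Bn2 {d} {T : measurableType d} {R : realType}
  (P : probability T R) (n : nat) (X : 'I_n -> {RV P >-> R}) : R :=
  \sum_(i < n) fine ('E_P[(fun x => X i x ^+ 2)%R])%E.

Definition Bn {d} {T : measurableType d} {R : realType}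
  (P : probability T R) (n : nat) (X : 'I_n -> {RV P >-> R}) : R :=
  Num.sqrt (Bn2 X).

Definition Ln {d} {T : measurableType d} {R : realType}
  (P : probability T R) (n : nat) (X : 'I_n -> {RV P >-> R}) (eps : R) : \bar R :=
  ((Bn2 X)^-1%:E *
   \sum_(i < n) 'E_P[(fun x => X i x ^+ 2 * \1_[set y | eps * Bn X <= `|X i y|] x)%R])%E.

Definition Mn {d} {T : measurableType d} {R : realType}
  (P : probability T R) (n : nat) (X : 'I_n -> {RV P >-> R}) (eps : R) : \bar R :=
  (((Bn X) ^+ 3)^-1%:E *
   \sum_(i < n) 'E_P[(fun x => `|X i x| ^+ 3 * \1_[set y | `|X i y| < eps * Bn X] x)%R])%E.

(* Main.v *)
Require Import Defs.
From HB Require Import structures.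
From mathcomp Require Import all_boot all_order all_algebra.
From mathcomp Require Import all_classical all_reals all_analysis.
From mathcomp Require Import ring lra measurable_realfun.
Import Order.TTheory GRing.Theory Num.Theory.
Local Open Scope ring_scope.
Lemma pt (R : realType) (B e a : R) : 0 < B -> 0 <= a ->
  (B^+2)^-1 * (a^+2 * (1 * B <= a)%R%:R) + (B^+3)^-1*(a^+3 * (a < 1 * B)%R%:R) <=
  (B^+2)^-1 * (a^+2 * (e * B <= a)%R%:R) + (B^+3)^-1*(a^+3 * (a < e * B)%R%:R).
Proof.
move=> B0 a0.
have h2 : (B^+2)^-1 * a^+2 = (a/B)^+2 by rewrite exprMn exprVn mulrC.
have h3 : (B^+3)^-1 * a^+3 = (a/B)^+3 by rewrite exprMn exprVn mulrC.
have u0 : 0 <= a / B by rewrite divr_ge0 // ltW.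
rewrite mul1r !(mulrA (B^+2)^-1 (a^+2)) !(mulrA (B^+3)^-1 (a^+3)) !h2 !h3.
have key : (B <= a) = (1 <= a / B) by rewrite ler_pdivlMr // mul1r.
have key2 : (a < B) = (a / B < 1) by rewrite ltr_pdivrMr // mul1r.
rewrite key key2.
case: (leP (e * B) a) => _; case: (leP 1 (a/B)) => h; rewrite /= ?mulr1 ?mulr0 ?addr0 ?add0r //.
all: nra.
Qed.

Local Open Scope ereal_scope.

Lemma ind_ge0 (T : Type) (R : realType) (A : set T) (x : T) : (0 <= (\1_A x : R))%R.
Proof. by rewrite /indic ler0n. Qed.

Lemma inb (T : Type) (b : T -> bool) x : (x \in [set y | b y]%classic) = b x.
Proof. by apply/idP/idP; rewrite in_setE. Qed.

Lemma meas_le d (T : measurableType d) (R : realType) (f : T -> R) (c : R) :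
  measurable_fun setT f -> measurable [set y | (c <= `|f y|)%R]%classic.
Proof.
move=> mf.
have mt : measurable [set true]%classic by [].
have := @measurable_realfun.measurable_fun_ler d T R setT (fun _ => c) (fun y => `|f y|)%R
  (measurable_cst _) (measurableT_comp (@measurable_realfun.normr_measurable _ _) mf)
  measurableT [set true]%classic mt.
by rewrite setTI; congr measurable; apply/seteqP; split => x /=.
Qed.

Lemma meas_lt d (T : measurableType d) (R : realType) (f : T -> R) (c : R) :
  measurable_fun setT f -> measurable [set y | (`|f y| < c)%R]%classic.
Proof.
move=> mf.
have mt : measurable [set true]%classic by [].
have := @measurable_realfun.measurable_fun_ltr d T R setT (fun y => `|f y|)%R (fun _ => c)
  (measurableT_comp (@measurable_realfun.normr_measurable _ _) mf) (measurable_cst _)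
  measurableT [set true]%classic mt.
by rewrite setTI; congr measurable; apply/seteqP; split => x /=.
Qed.

Theorem lemma1 (d : measure_display) (T : measurableType d) (R : realType)
  (P : probability T R) (n : nat) (X : 'I_n -> {RV P >-> R}) :
  mutually_independent X ->
  (forall i, 'E_P[X i] = 0%E) ->
  (forall i, (0 < 'E_P[(fun x => X i x ^+ 2)%R])%E /\ ('E_P[(fun x => X i x ^+ 2)%R] < +oo)%E) ->
  forall eps : R, (0 < eps)%R ->
  (Ln X 1%R + Mn X 1%R <= Ln X eps + Mn X eps)%E.
Proof.
move=> _ _ _ eps eps0.
have B20 : (0 <= Bn2 X)%R.
  rewrite /Bn2; apply: sumr_ge0 => i _; apply: fine_ge0.
  rewrite expectation.unlock; apply: integral_ge0 => x _; rewrite lee_fin; exact: sqr_ge0.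
have hB2 : Bn2 X = (Bn X ^+ 2)%R by rewrite /Bn sqr_sqrtr.
have B0 : (0 <= Bn X)%R by rewrite /Bn sqrtr_ge0.
have mX : forall i, measurable_fun setT (X i) := fun i => measurable_funPT (X i).
have Ege0 : forall (f : T -> R), (forall x, 0 <= f x)%R -> 0 <= 'E_P[f].
  by move=> f f0; rewrite expectation.unlock; apply: integral_ge0 => x _; rewrite lee_fin.
have [Bz|Bp] := eqVneq (Bn X) 0%R.
  by rewrite /Ln /Mn hB2 Bz !expr0n /= invr0 !mul0e.
have Bpos : (0 < Bn X)%R by rewrite lt0r Bp.
set B := Bn X.
have key : forall e, (Ln X e + Mn X e) = \sum_(i < n) 'E_P[(fun x =>
   (B^+2)^-1 * (X i x ^+ 2 * \1_[set y | e * B <= `|X i y|]%classic x) +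
   (B^+3)^-1 * (`|X i x| ^+ 3 * \1_[set y | `|X i y| < e * B]%classic x))%R].
  move=> e; rewrite /Ln /Mn -/B hB2.
  rewrite !ge0_sume_distrr; last 2 first.
  - by move=> i _; apply: Ege0 => x; rewrite mulr_ge0 // ?exprn_ge0 //.
  - by move=> i _; apply: Ege0 => x; rewrite mulr_ge0 // ?sqr_ge0.
  rewrite -big_split /=; apply: eq_bigr => i _.
  rewrite expectation.unlock.
  have Bge : (0 <= B)%R by exact: ltW.
  have m1 : measurable_fun setT (fun x => X i x ^+ 2 * \1_[set y | e * B <= `|X i y|]%classic x)%R.
    apply: measurable_realfun.measurable_funM; first exact: measurable_realfun.measurable_funX (mX i).
    exact/measurable_realfun.measurable_indic/meas_le.
  have m2 : measurable_fun setT (fun x => `|X i x| ^+ 3 * \1_[set y | `|X i y| < e * B]%classic x)%R.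
    apply: measurable_realfun.measurable_funM.
      exact: measurable_realfun.measurable_funX (measurableT_comp (@measurable_realfun.normr_measurable _ _) (mX i)).
    exact/measurable_realfun.measurable_indic/meas_lt.
  rewrite -/B -!ge0_integralZl_EFin //; first last.
  all: try by rewrite invr_ge0 exprn_ge0.
  all: try exact/measurable_realfun.measurable_EFinP.
  all: try by move=> x _; rewrite lee_fin mulr_ge0 // ?sqr_ge0 ?exprn_ge0.
  rewrite -ge0_integralD //.
  - by move=> x _; rewrite lee_fin mulr_ge0 ?invr_ge0 ?exprn_ge0 // mulr_ge0 // sqr_ge0.
  - apply/measurable_realfun.measurable_EFinP; apply: measurable_realfun.measurable_funM; first exact: measurable_cst.
    apply: measurable_realfun.measurable_funM; first exact: measurable_realfun.measurable_funX (mX i).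
    exact/measurable_realfun.measurable_indic/meas_le.
  - by move=> x _; rewrite lee_fin !mulr_ge0 ?invr_ge0 ?exprn_ge0.
  - apply/measurable_realfun.measurable_EFinP; apply: measurable_realfun.measurable_funM; first exact: measurable_cst.
    apply: measurable_realfun.measurable_funM.
      exact: measurable_realfun.measurable_funX (measurableT_comp (@measurable_realfun.normr_measurable _ _) (mX i)).
    exact/measurable_realfun.measurable_indic/meas_lt.
rewrite !key; apply: lee_sum => i _.
have Bge : (0 <= B)%R by exact: ltW.
have mF : forall e, measurable_fun setT (fun x : T => ( ((B^+2)^-1 * (X i x ^+ 2 * \1_[set y | e * B <= `|X i y|]%classic x) +
   (B^+3)^-1 * (`|X i x| ^+ 3 * \1_[set y | `|X i y| < e * B]%classic x))%R%:E : \bar R)).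
  move=> e; apply/measurable_realfun.measurable_EFinP.
  apply: measurable_funD.
  - apply: measurable_realfun.measurable_funM; first exact: measurable_cst.
    apply: measurable_realfun.measurable_funM; first exact: measurable_realfun.measurable_funX (mX i).
    exact/measurable_realfun.measurable_indic/meas_le.
  - apply: measurable_realfun.measurable_funM; first exact: measurable_cst.
    apply: measurable_realfun.measurable_funM.
      exact: measurable_realfun.measurable_funX (measurableT_comp (@measurable_realfun.normr_measurable _ _) (mX i)).
    exact/measurable_realfun.measurable_indic/meas_lt.
rewrite expectation.unlock; apply: ge0_le_integral => //.
- move=> x _; rewrite lee_fin; apply: addr_ge0; apply: mulr_ge0; rewrite ?invr_ge0 ?exprn_ge0 //; apply: mulr_ge0; by rewrite ?sqr_ge0 ?exprn_ge0 ?ind_ge0.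
move=> x _; rewrite lee_fin !indicE !inb.
have h2 : (X i x ^+ 2 = `|X i x| ^+ 2)%R by rewrite real_normK // num_real.
rewrite h2; exact: pt.
Qed.
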